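(* Let $O\rhd c_1$ and $O\rhd c_2$ be P-markings. Then $O\rhd c_1\sim_{C}O\rhd c_2$ if and only if $[O]_\cong\rhd c_1\alpha_O\sim_{AC}[O]_\cong\rhd c_2\alpha_O$.
   Context: Fix a set $Act$ of action labels and an infinite set $\mathcal{E}$ of event names. A finite $Act$-labelled poset (poset for short) is $O=(X_O,\preccurlyeq_O,l_O)$ with $X_O\subseteq\mathcal{E}$ finite, $\preccurlyeq_O$ a partial order on $X_O$, $l_O\colon X_O\to Act$; $|O|=\{(x,l_O(x)):x\in X_O\}$, $x_a$ denotes $(x,a)$, and $O$ is also regarded as a poset on $|O|$. A morphism is an order- and label-preserving map, acting on labelled events by $\sigma(x_a)=\sigma(x)_a$; an isomorphism is a bijective morphism with morphism inverse. For $K\subseteq|O|$, $\max_O K$ is its set of maximal elements; $K$ is down-closed if $y\in K$, $x\preccurlyeq_O y$ imply $x\in K$. A net $N=(S,T,F,l)$: disjoint sets $S,T$, $F\subseteq(S\times T)\cup(T\times S)$, $l\colon T\to Act$, ${}^\bullet t=\{s:(s,t)\in F\}$, $t^\bullet=\{s:(t,s)\in F\}$ nonempty. Fix $N$. A causal marking is a finite set $c$ of pairs $K\vdash s$ ($s\in S$, $K$ finite $\subseteq\mathcal{E}\times Act$); $\mathcal{K}(c)$ is the union of its cause sets, $|c|$ its set of places, $K\vdash m=\{K\vdash s:s\in m\}$, and $c\sigma=\{\sigma(K)\vdash s:K\vdash s\in c\}$. A P-marking $O\rhd c$: every cause set of $c$ is a down-closed subset of $|O|$. $\delta(O,K,e_a)$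 (for $K\subseteq|O|$, $e\notin X_O$) is $O$ plus the event $e$ with label $a$ above every element of $K$, reflexively-transitively closed. Concrete causal case graph (CG$_C$): smallest transition relation on P-markings with $O\rhd c\cup c'\xrightarrow{K\vdash e_a}\delta(O,K,e_a)\rhd(\mathcal{K}(c)\cup\{e_a\}\vdash t^\bullet)\cup c'$ whenever $t\in T$, $O\rhd c\cup c'$ is a P-marking, $|c|={}^\bullet t$, $a=l(t)$, $e\in\mathcal{E}\setminus X_O$, $K=\max_O\mathcal{K}(c)$. A concrete causal bisimulation is a family $\{R_O\}$ of relations on P-markings indexed by posets such that: if $(O_1\rhd c_1,O_2\rhd c_2)\in R_O$ then $O_1=O_2=O$; and if $(O\rhd c_1,O\rhd c_2)\in R_O$ and $O\rhd c_1\xrightarrow{K\vdash e_a}O'\rhd c_1'$ then $O\rhd c_2\xrightarrow{K\vdash e_a}O'\rhd c_2'$ for some $c_2'$ with $(O'\rhd c_1',O'\rhd c_2')\in R_{O'}$, and vice versa. $\sim_C$ is the greatest one. Abstract setting: for each poset $O$ fix a canonical representative $[O]_\cong$ of its isomorphism class and an isomorphism $\alpha_O\colon O\to[O]_\cong$; $O$ is abstract if $[O]_\cong=O$, and an abstract P-marking is one whose poset is abstract. For abstract $O$, $K\subseteq|O|$, $a\in Act$: $\delta(O,K,a)=[\delta(O,K,e_a)]_\cong$ (any $e\notin X_O$), $new(O,K,a)$ is the element of $\delta(O,K,a)$ corresponding to the added event and $old(O,K,a)\colon O\to\delta(O,K,a)$ the embedding corresponding to the inclusion of $O$ (fixed choices).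 For a CG$_C$ transition $O\rhd c\xrightarrow{K\vdash e_a}\delta(O,K,e_a)\rhd c'$, let $c'_{O,K,e_a}$ be $c'$ renamed by the isomorphism $\delta(O,K,e_a)\to\delta([O]_\cong,\alpha_O(K),a)$ sending $x\in X_O$ to $old([O]_\cong,\alpha_O(K),a)(\alpha_O(x))$ and $e_a$ to $new([O]_\cong,\alpha_O(K),a)$. The abstract causal case graph (CG$_{AC}$) has a transition $[O]_\cong\rhd c\alpha_O\stackrel{\alpha_O(K)\vdash a}{\Longrightarrow}\delta([O]_\cong,\alpha_O(K),a)\rhd c'_{O,K,e_a}$ for each such CG$_C$ transition. An abstract causal bisimulation is a family $\{R_O\}$ indexed by abstract posets of relations on abstract P-markings such that: $(O_1\rhd c_1,O_2\rhd c_2)\in R_O$ implies $O_1=O_2=O$; and if $(O\rhd c_1,O\rhd c_2)\in R_O$ and $O\rhd c_1\stackrel{K\vdash a}{\Longrightarrow}O'\rhd c_1'$ then $O\rhd c_2\stackrel{K\vdash a}{\Longrightarrow}O'\rhd c_2'$ with $(O'\rhd c_1',O'\rhd c_2')\in R_{O'}$, and vice versa. $\sim_{AC}$ is the greatest one. *)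

(* Defs.v *)
From HB Require Import structures.
From mathcomp Require Import all_boot.
From mathcomp Require Import finmap.

Set Implicit Arguments.
Unset Strict Implicit.
Unset Printing Implicit Defensive.

Local Open Scope fset_scope.

Section Causal.

Variables (E Act : choiceType).

Definition lev := (E * Act)%type.

(* A finite Act-labelled poset, represented by its set |O| of labelled
   events and its order relation as a finite set of pairs on |O|.
   (Leibniz equality of this representation = equality of labelled posets.) *)
Definition poset := ({fset lev} * {fset (lev * lev)})%type.

Definition evX (O : poset) : {fset E} := [fset x.1 | x in O.1].

Definition wf_poset (O : poset) : Prop :=
  (forall x a b, (x, a) \in O.1 -> (x, b) \in O.1 -> a = b) /\
  (forall u v, (u, v) \in O.2 -> u \in O.1 /\ v \in O.1) /\
  (forall u, u \in O.1 -> (u, u) \in O.2) /\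
  (forall u v, (u, v) \in O.2 -> (v, u) \in O.2 -> u = v) /\
  (forall u v w, (u, v) \in O.2 -> (v, w) \in O.2 -> (u, w) \in O.2).

Definition maxs (O : poset) (K : {fset lev}) : {fset lev} :=
  [fset u in K | ~~ has (fun v => (v != u) && ((u, v) \in O.2)) K].

Definition down_closed (O : poset) (K : {fset lev}) : Prop :=
  K `<=` O.1 /\ (forall u v, v \in K -> (u, v) \in O.2 -> u \in K).

(* delta(O,K,e_a): O plus e_a above every element of K, refl.-trans. closed.
   For a poset O and K a subset of |O| the reflexive-transitive closure is
   exactly: old order, pairs (u, e_a) with u below some element of K, and
   (e_a, e_a). *)
Definition delta (O : poset) (K : {fset lev}) (e : E) (a : Act) : poset :=
  ((e, a) |` O.1,
   O.2 `|` [fset (u, (e, a)) | u in [fset u in O.1 | has (fun k => (u, k) \in O.2) K]]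
       `|` [fset ((e, a), (e, a))]).

Definition lrename (s : E -> E) (u : lev) : lev := (s u.1, u.2).
Definition srename (s : E -> E) (K : {fset lev}) : {fset lev} :=
  [fset lrename s u | u in K].

Definition morphism (O O' : poset) (s : E -> E) : Prop :=
  (forall u, u \in O.1 -> lrename s u \in O'.1) /\
  (forall u v, (u, v) \in O.2 -> (lrename s u, lrename s v) \in O'.2).

Definition iso (O O' : poset) (s : E -> E) : Prop :=
  morphism O O' s /\
  exists t : E -> E, morphism O' O t /\
    (forall x, x \in evX O -> t (s x) = x) /\
    (forall y, y \in evX O' -> s (t y) = y).

Variable S T : choiceType.

Record net := Net { pre : T -> {fset S}; post : T -> {fset S}; lab : T -> Act }.

Definition wf_net (N : net) : Prop :=
  forall t, pre N t != fset0 /\ post N t != fset0.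

Definition cmark := {fset ({fset lev} * S)}.

Definition causes (c : cmark) : {fset lev} := \bigcup_(p <- c) p.1.
Definition places (c : cmark) : {fset S} := [fset p.2 | p in c].
Definition mk (K : {fset lev}) (m : {fset S}) : cmark := [fset (K, s) | s in m].
Definition crename (s : E -> E) (c : cmark) : cmark :=
  [fset (srename s p.1, p.2) | p in c].

Definition pmark := (poset * cmark)%type.

Definition is_pmark (p : pmark) : Prop :=
  wf_poset p.1 /\ forall k, k \in p.2 -> down_closed p.1 k.1.

Definition tlabel := ({fset lev} * lev)%type.

Definition stepC (N : net) (p : pmark) (lb : tlabel) (q : pmark) : Prop :=
  exists (t : T) (c c' : cmark),
    is_pmark p /\ p.2 = c `|` c' /\ places c = pre N t /\
    lb.2.2 = lab N t /\ lb.2.1 \notin evX p.1 /\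
    lb.1 = maxs p.1 (causes c) /\
    q = (delta p.1 lb.1 lb.2.1 lb.2.2,
         mk (causes c `|` [fset lb.2]) (post N t) `|` c').

Definition cbisim (N : net) (R : poset -> pmark -> pmark -> Prop) : Prop :=
  forall O p q, R O p q ->
    is_pmark p /\ is_pmark q /\ p.1 = O /\ q.1 = O /\
    (forall lb p', stepC N p lb p' ->
       exists q', stepC N q lb q' /\ q'.1 = p'.1 /\ R p'.1 p' q') /\
    (forall lb q', stepC N q lb q' ->
       exists p', stepC N p lb p' /\ p'.1 = q'.1 /\ R q'.1 p' q').

(* O |> c1 ~_C O |> c2, i.e. membership in the O-component of the greatest
   concrete causal bisimulation *)
Definition simC (N : net) (O : poset) (p q : pmark) : Prop :=
  exists R, cbisim N R /\ R O p q.

(* The abstract setting: canonical representatives [O], isomorphisms alpha_O,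
   and fixed choices new(O,K,a), old(O,K,a). *)
Record abs_setting := AbsSetting {
  canon : poset -> poset;
  alpha : poset -> E -> E;
  newf  : poset -> {fset lev} -> Act -> E;
  oldf  : poset -> {fset lev} -> Act -> E -> E }.

Definition wf_setting (A : abs_setting) : Prop :=
  (forall O, wf_poset O -> wf_poset (canon A O)) /\
  (forall O, wf_poset O -> iso O (canon A O) (alpha A O)) /\
  (forall O O', wf_poset O -> wf_poset O' ->
     (exists s, iso O O' s) -> canon A O = canon A O') /\
  (* new/old correspond to the added event / inclusion of O *)
  (forall O K a e, wf_poset O -> canon A O = O -> K `<=` O.1 ->
     e \notin evX O ->
     iso (delta O K e a) (canon A (delta O K e a))
         (fun x => if x == e then newf A O K a else oldf A O K a x)).

Definition stepAC (N : net) (A : abs_setting) (p : pmark)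
    (lb : {fset lev} * Act) (q : pmark) : Prop :=
  exists (O : poset) (c : cmark) (K : {fset lev}) (e : E) (a : Act) (c' : cmark),
    stepC N (O, c) (K, (e, a)) (delta O K e a, c') /\
    p = (canon A O, crename (alpha A O) c) /\
    lb = (srename (alpha A O) K, a) /\
    exists e', e' \notin evX (canon A O) /\
      q = (canon A (delta (canon A O) (srename (alpha A O) K) e' a),
           crename (fun x => if x == e
                             then newf A (canon A O) (srename (alpha A O) K) a
                             else oldf A (canon A O) (srename (alpha A O) K) a
                                       (alpha A O x)) c').

Definition abisim (N : net) (A : abs_setting)
    (R : poset -> pmark -> pmark -> Prop) : Prop :=
  forall O p q, R O p q ->
    canon A O = O /\
    is_pmark p /\ is_pmark q /\ p.1 = O /\ q.1 = O /\
    (forall lb p', stepAC N A p lb p' ->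
       exists q', stepAC N A q lb q' /\ q'.1 = p'.1 /\ R p'.1 p' q') /\
    (forall lb q', stepAC N A q lb q' ->
       exists p', stepAC N A p lb p' /\ p'.1 = q'.1 /\ R q'.1 p' q').

Definition simAC (N : net) (A : abs_setting) (O : poset) (p q : pmark) : Prop :=
  exists R, abisim N A R /\ R O p q.

End Causal.

(* Main.v *)
Require Import Defs.
From HB Require Import structures.
From mathcomp Require Import all_boot.
From mathcomp Require Import finmap.
Set Implicit Arguments.
Unset Strict Implicit.
Unset Printing Implicit Defensive.
Local Open Scope fset_scope.

Section Aux.
Variables (E Act S T : choiceType).
Implicit Types (O : poset E Act) (K : {fset lev E Act}) (c : cmark E Act S) (s t : E -> E).

Lemma evXP O x : reflect (exists a, (x, a) \in O.1) (x \in evX O).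
Proof.
apply: (iffP idP) => [/imfsetP[[y b] /= H ->]|[a H]]; first by exists b.
by apply/imfsetP; exists (x, a).
Qed.

Lemma evX_in O u : u \in O.1 -> u.1 \in evX O.
Proof. by case: u => x a H; apply/evXP; exists a. Qed.

Lemma lrename_comp s t (u : lev E Act) : lrename s (lrename t u) = lrename (s \o t) u.
Proof. by []. Qed.

Lemma srename_comp s t K : srename s (srename t K) = srename (s \o t) K.
Proof. by rewrite /srename -imfset_comp. Qed.

Lemma srename_eq s t K : (forall u, u \in K -> s u.1 = t u.1) -> srename s K = srename t K.
Proof.
move=> H; apply: eq_in_imfset => u /= uK; rewrite /lrename H //.
Qed.

Lemma srename_id K : srename id K = K.
Proof.
rewrite /srename -[RHS]imfset_id; apply: eq_imfset => //; by case.
Qed.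

Lemma crename_comp s t c : crename s (crename t c) = crename (s \o t) c.
Proof.
rewrite /crename -imfset_comp; apply: eq_imfset => //= p.
by rewrite /= srename_comp.
Qed.

Lemma crename_eq s t c : (forall p u, p \in c -> u \in p.1 -> s u.1 = t u.1) ->
  crename s c = crename t c.
Proof.
move=> H; apply: eq_in_imfset => p /= pc; rewrite (@srename_eq s t) //.
by move=> u; apply: H.
Qed.

Lemma crename_id c : crename id c = c.
Proof.
rewrite /crename -[RHS]imfset_id; apply: eq_imfset => //; case=> K s /=.
by rewrite srename_id.
Qed.

Lemma crenameU s c c' : crename s (c `|` c') = crename s c `|` crename s c'.
Proof. by rewrite /crename imfsetU. Qed.

Lemma places_crename s c : places (crename s c) = places c.
Proof.
rewrite /places /crename -imfset_comp; apply: eq_imfset => //.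
Qed.

Lemma causesP c u : reflect (exists2 p, p \in c & u \in p.1) (u \in causes c).
Proof.
apply: (iffP idP) => [/bigfcupP[p /andP[pc _] H]|[p pc H]]; first by exists p.
by apply/bigfcupP; exists p; rewrite ?pc.
Qed.

Lemma causes_crename s c : causes (crename s c) = srename s (causes c).
Proof.
apply/fsetP => u; apply/causesP/imfsetP => [[p /imfsetP[q /= qc ->] /imfsetP[v /= vq ->]]|].
  by exists v => //; apply/causesP; exists q.
move=> [v /= /causesP[q qc vq] ->]; exists (srename s q.1, q.2).
  by apply/imfsetP; exists q.
by apply/imfsetP; exists v.
Qed.

Lemma mk_crename s K (m : {fset S}) : crename s (mk K m) = mk (srename s K) m.
Proof.
rewrite /crename /mk -imfset_comp; by apply: eq_imfset.
Qed.

End Aux.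

Section Iso.
Variables (E Act S T : choiceType).
Implicit Types (O : poset E Act) (K : {fset lev E Act}) (c : cmark E Act S) (s t : E -> E).

Lemma morph_evX O O' s x : morphism O O' s -> x \in evX O -> s x \in evX O'.
Proof.
move=> [H1 _] /evXP[a Ha]; apply/evXP; exists a; exact: (H1 (x, a)).
Qed.

Lemma morph_lev O O' s u : morphism O O' s -> u \in O.1 -> lrename s u \in O'.1.
Proof. by move=> [H1 _]; apply: H1. Qed.

Lemma iso_inv O O' s : iso O O' s -> exists t, iso O' O t /\
  (forall x, x \in evX O -> t (s x) = x) /\ (forall y, y \in evX O' -> s (t y) = y).
Proof.
move=> [Hs [t [Ht [H1 H2]]]]; exists t; split => //; split => //.
by exists s.
Qed.

Lemma morph_ext O O' s s' : wf_poset O -> morphism O O' s ->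
  (forall x, x \in evX O -> s x = s' x) -> morphism O O' s'.
Proof.
move=> [_ [Hsub _]] [H1 H2] He; split.
  by move=> u uO; rewrite /lrename -He ?evX_in //; apply: H1.
move=> u v uv; have [uO vO] := Hsub _ _ uv.
by rewrite /lrename -!He ?evX_in //; apply: H2.
Qed.

Lemma iso_ext O O' s s' : wf_poset O -> wf_poset O' -> iso O O' s ->
  (forall x, x \in evX O -> s x = s' x) -> iso O O' s'.
Proof.
move=> wO wO' [Hs [t [Ht [H1 H2]]]] He; split; first exact: morph_ext Hs He.
exists t; split => //; split => x xO; first by rewrite -He ?H1.
by rewrite -He ?H2 //; apply: morph_evX Ht xO.
Qed.

Lemma iso_comp O1 O2 O3 s s' : iso O1 O2 s -> iso O2 O3 s' -> iso O1 O3 (s' \o s).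
Proof.
move=> [[a1 a2] [t [[b1 b2] [c1 c2]]]] [[a1' a2'] [t' [[b1' b2'] [c1' c2']]]].
split; first by split => [u uO|u v uv]; [apply: (a1' (lrename s u)); apply: a1 | apply: (a2' (lrename s u) (lrename s v)); apply: a2].
exists (t \o t'); split; first by split => [u uO|u v uv]; [apply: (b1 (lrename t' u)); apply: b1' | apply: (b2 (lrename t' u) (lrename t' v)); apply: b2'].
split => x xO /=.
  by rewrite c1' ?c1 //; apply: (@morph_evX O1 O2 s) => //; split.
by rewrite c2 ?c2' //; apply: (@morph_evX O3 O2 t') => //; split.
Qed.

Lemma pmark_sub O c p u : is_pmark (O, c) -> p \in c -> u \in p.1 -> u \in O.1.
Proof.
move=> [_ H] pc up; have [/fsubsetP sub _] := H p pc; exact: sub.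
Qed.

Lemma pmark_transport O O' s c : wf_poset O' -> iso O O' s -> is_pmark (O, c) ->
  is_pmark (O', crename s c).
Proof.
move=> wO' [Hs [t [Ht [H1 H2]]]] Hc; split => // k /imfsetP[p /= pc ->] /=.
have [Hsub Hdown] := Hc.2 p pc.
split.
  apply/fsubsetP => u /imfsetP[v /= vp ->]; apply: (morph_lev Hs).
  exact: (fsubsetP Hsub).
move=> u v /imfsetP[v0 /= v0p ->] uv.
have v0O : v0 \in O.1 by apply: (fsubsetP Hsub).
have uO' : u \in O'.1 by have [_ [Hs' _]] := wO'; exact: (Hs' _ _ uv).1.
have := Ht.2 _ _ uv; rewrite lrename_comp.
have -> : lrename (t \o s) v0 = v0.
  by move: v0O; case: (v0) => x a xa; rewrite /lrename /= H1 //; apply: (evX_in xa).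
move=> tuv; have tu := Hdown _ _ v0p tuv.
apply/imfsetP; exists (lrename t u) => //=.
by move: uO'; case: (u) => y b yb; rewrite /lrename /= H2 //; apply: (evX_in yb).
Qed.

End Iso.

Section Delta.
Variables (E Act S T : choiceType).
Implicit Types (O : poset E Act) (K : {fset lev E Act}) (c : cmark E Act S) (s t : E -> E).

Lemma maxsE O K u : (u \in maxs O K) = (u \in K) && ~~ has (fun v => (v != u) && ((u, v) \in O.2)) K.
Proof. by rewrite /maxs !inE. Qed.

Lemma maxs_sub O K : maxs O K `<=` K.
Proof. by apply/fsubsetP => u; rewrite maxsE => /andP[]. Qed.

Lemma delta1E O K e a u : (u \in (delta O K e a).1) = (u == (e, a)) || (u \in O.1).
Proof. by rewrite /delta /= in_fsetU in_fset1. Qed.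

Lemma delta2P O K e a u v : (u, v) \in (delta O K e a).2 <->
  [\/ (u, v) \in O.2, v = (e, a) /\ u \in O.1 /\ (exists2 k, k \in K & (u, k) \in O.2) |
      u = (e, a) /\ v = (e, a)].
Proof.
rewrite /delta /= !in_fsetU in_fset1; split.
  case/orP => [/orP[H|/imfsetP[w /= ] ]|/eqP[-> ->]]; [by constructor 1| |by constructor 3].
  rewrite !inE => /andP[wO /hasP[k kK wk]] [-> ->]; constructor 2; split => //; split => //.
  by exists k.
case => [->//|[-> [uO [k kK uk]]]|[-> ->]]; last by rewrite eqxx !orbT.
apply/orP; left; apply/orP; right; apply/imfsetP; exists u => //=.
by rewrite !inE uO /=; apply/hasP; exists k.
Qed.

Lemma evX_delta O K e a x : (x \in evX (delta O K e a)) = (x == e) || (x \in evX O).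
Proof.
apply/evXP/orP => [[b]|[/eqP->|/evXP[b xb]]].
  by rewrite delta1E => /orP[/eqP[-> _]|H]; [left|right; apply: (evX_in H)].
  by exists a; rewrite delta1E eqxx.
by exists b; rewrite delta1E xb orbT.
Qed.

Lemma ea_notin O e a : e \notin evX O -> (e, a) \notin O.1.
Proof. by move=> H; apply/negP => /evX_in /=; apply/negP. Qed.

Lemma wf_delta O K e a : wf_poset O -> e \notin evX O -> wf_poset (delta O K e a).
Proof.
move=> [Hlab [Hsub [Hrefl [Hanti Htrans]]]] eO.
have nea := ea_notin a eO.
have nO2l w : (e, a, w) \in O.2 -> False.
  by move=> /Hsub[H _]; move: nea; rewrite H.
have nO2r w : (w, (e, a)) \in O.2 -> False.
  by move=> /Hsub[_ H]; move: nea; rewrite H.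
split.
  move=> x b1 b2; rewrite !delta1E => /orP[/eqP[ex eb1]|H1] /orP[/eqP[ex2 eb2]|H2].
  - by rewrite eb1 eb2.
  - by move/evX_in: H2; rewrite /= ex (negbTE eO).
  - by move/evX_in: H1; rewrite /= ex2 (negbTE eO).
  - exact: Hlab H1 H2.
split.
  move=> u v /delta2P[H|[-> [uO _]]|[-> ->]]; rewrite !delta1E ?eqxx ?uO ?orbT //.
  by have [-> ->] := Hsub _ _ H; rewrite !orbT.
split.
  move=> u; rewrite delta1E => /orP[/eqP eu|uO]; apply/delta2P; first by constructor 3.
  by constructor 1; apply: Hrefl.
split.
  move=> u v H1 H2; case/delta2P: H1 => [H|[ev [uO _]]|[eu ev]]; last by rewrite eu ev.
    case/delta2P: H2 => [H'|[eu [vO _]]|[ev eu]]; first exact: Hanti.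
      by case: (nO2l v); rewrite -eu.
    by case: (nO2r u); rewrite -ev.
  rewrite ev in H2; case/delta2P: H2 => [H'|[_ [eaO _]]|[_ eu]].
  - by case: (nO2l _ H').
  - by rewrite eaO in nea.
  - by move: nea; rewrite -{1}eu uO.
move=> u v w H1 H2; case/delta2P: H1 => [H|[ev [uO [k kK uk]]]|[eu ev]].
- case/delta2P: H2 => [H'|[ew [vO [k kK vk]]]|[ev ew]].
  + by apply/delta2P; constructor 1; apply: Htrans H H'.
  + rewrite ew; apply/delta2P; constructor 2; split => //; split; first by have [] := Hsub _ _ H.
    exists k; [done | exact: (Htrans _ _ _ H vk)].
  + by case: (nO2r u); rewrite -ev.
- rewrite ev in H2; case/delta2P: H2 => [H'|[_ [eaO _]]|[_ ew]].
  + by case: (nO2l _ H').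
  + by rewrite eaO in nea.
  + by rewrite ew; apply/delta2P; constructor 2; split => //; split => //; exists k.
- by rewrite eu -ev.
Qed.

Lemma dc_delta O K e a k : wf_poset O -> e \notin evX O -> down_closed O k ->
  down_closed (delta O K e a) k.
Proof.
move=> [_ [Hsub _]] eO [ksub kdc]; have nea := ea_notin a eO.
split.
  by apply/fsubsetP => u uk; rewrite delta1E (fsubsetP ksub) ?orbT.
move=> u v vk /delta2P[H|[ev _]|[_ ev]]; first exact: kdc vk H.
- by move: nea; rewrite -ev (fsubsetP ksub).
- by move: nea; rewrite -ev (fsubsetP ksub).
Qed.

Lemma step_inv (N : net Act S T) p K e a q : stepC N p (K, (e, a)) q ->
  [/\ is_pmark p, e \notin evX p.1, K `<=` p.1.1 & q.1 = delta p.1 K e a].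
Proof.
move=> [t [c [c' [Hp [Hc [_ [_ [/= eO [/= HK ->]]]]]]]]]; split => //.
rewrite HK; apply: fsubset_trans (maxs_sub _ _) _; apply/fsubsetP => u /causesP[k kc uk].
by apply: (pmark_sub (p := k) Hp) => //; rewrite Hc in_fsetU kc.
Qed.

Lemma step_target (N : net Act S T) (p : pmark E Act S) (lb : tlabel E Act) q : stepC N p lb q -> is_pmark q.
Proof.
move=> [t [c [c' [Hp [Hc [_ [_ [eO [HK ->]]]]]]]]].
case: lb HK eO => K [e a] /= HK eO.
have wO := Hp.1.
split; first exact: wf_delta.
move=> k /=; rewrite in_fsetU => /orP[/imfsetP[x /= _ ->]|kc'] /=; last first.
  by apply: dc_delta => //; apply: Hp.2; rewrite Hc in_fsetU kc' orbT.
have [_ [Hsub _]] := wO; have nea := ea_notin a eO.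
have dcc : forall u v, v \in causes c -> (u, v) \in p.1.2 -> u \in causes c.
  move=> u v /causesP[k0 k0c vk0] uv; apply/causesP; exists k0 => //.
  have k0p : k0 \in p.2 by rewrite Hc in_fsetU k0c.
  have [_ H] := Hp.2 k0 k0p; exact: H vk0 uv.
split.
  apply/fsubsetP => u; rewrite in_fsetU in_fset1 delta1E => /orP[/causesP[k0 k0c uk0]|->//].
  by rewrite (pmark_sub (p := k0) Hp) ?orbT // Hc in_fsetU k0c.
have cO v : v \in causes c -> v \in p.1.1.
  by move=> /causesP[k0 k0c vk0]; apply: (pmark_sub (p := k0) Hp) => //; rewrite Hc in_fsetU k0c.
move=> u v vin /(@delta2P p.1 K e a); move: vin.
rewrite in_fsetU in_fset1 => /orP[vc|/eqP ->].
- case=> [H|[ev _]|[_ ev]]; first by rewrite in_fsetU (dcc _ _ vc H).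
  + by move: nea; rewrite -ev cO.
  + by move: nea; rewrite -ev cO.
- case=> [H|[_ [uO [k0 k0K uk0]]]|[-> _]]; last by rewrite in_fsetU in_fset1 eqxx orbT.
  + by move: nea; rewrite (Hsub _ _ H).2.
  + rewrite in_fsetU (dcc _ k0) //; move: k0K; rewrite HK => /(fsubsetP (maxs_sub _ _)); done.
Qed.

End Delta.

Definition ext (E : choiceType) (s : E -> E) (e e2 : E) := fun x => if x == e then e2 else s x.

Section Transport.
Variables (E Act S T : choiceType).
Implicit Types (O : poset E Act) (K : {fset lev E Act}) (c : cmark E Act S) (s t : E -> E).

Lemma ext_ne s e e2 x : x != e -> ext s e e2 x = s x.
Proof. by rewrite /ext => /negbTE ->. Qed.

Lemma ext_e s e e2 : ext s e e2 e = e2.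
Proof. by rewrite /ext eqxx. Qed.

Lemma ne_of_evX O e x : e \notin evX O -> x \in evX O -> x != e.
Proof. by move=> eO xO; apply/eqP => xe; rewrite -xe xO in eO. Qed.

Lemma lrename_ext O s e e2 u : e \notin evX O -> u \in O.1 ->
  lrename (ext s e e2) u = lrename s u.
Proof.
by move=> eO uO; rewrite /lrename ext_ne // (ne_of_evX eO (evX_in uO)).
Qed.

Lemma delta_morph O O' s K e e2 a : morphism O O' s -> wf_poset O ->
  e \notin evX O -> K `<=` O.1 ->
  morphism (delta O K e a) (delta O' (srename s K) e2 a) (ext s e e2).
Proof.
move=> [m1 m2] [_ [Hsub _]] eO sK; split.
  move=> u; rewrite delta1E => /orP[/eqP->|uO].
    by rewrite delta1E /lrename /= ext_e eqxx.
  by rewrite (lrename_ext _ _ eO uO) delta1E m1 ?orbT.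
move=> u v /delta2P[H|[-> [uO [k kK uk]]]|[-> ->]].
- have [uO vO] := Hsub _ _ H.
  by rewrite !(lrename_ext _ _ eO) //; apply/delta2P; constructor 1; apply: m2.
- rewrite (lrename_ext _ _ eO uO) {2}/lrename /= ext_e; apply/delta2P; constructor 2.
  split => //; split; first exact: m1.
  by exists (lrename s k); [apply/imfsetP; exists k | apply: m2].
- by rewrite /lrename /= ext_e; apply/delta2P; constructor 3.
Qed.

Lemma iso_lK O s t u : (forall x, x \in evX O -> t (s x) = x) -> u \in O.1 ->
  lrename t (lrename s u) = u.
Proof. by move=> H uO; move: (evX_in uO); case: u uO => x b /= _ xO; rewrite /lrename /= H. Qed.

Lemma delta_iso O O' s K e e2 a : iso O O' s -> wf_poset O -> wf_poset O' ->
  e \notin evX O -> e2 \notin evX O' -> K `<=` O.1 ->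
  iso (delta O K e a) (delta O' (srename s K) e2 a) (ext s e e2).
Proof.
move=> Hs wO wO' eO e2O sK.
have [t [Ht [H1 H2]]] := iso_inv Hs.
split; first exact: delta_morph Hs.1 wO eO sK.
exists (ext t e2 e); split.
  have -> : delta O K e a = delta O (srename t (srename s K)) e a.
    rewrite srename_comp (@srename_eq _ _ _ id) ?srename_id //.
    by move=> u uK; rewrite /= H1 // evX_in // (fsubsetP sK).
  apply: delta_morph Ht.1 wO' e2O _.
  apply/fsubsetP => u /imfsetP[v /= vK ->]; apply: (morph_lev Hs.1); exact: (fsubsetP sK).
split => x; rewrite evX_delta => /orP[/eqP->|xO].
- by rewrite !ext_e.
- rewrite (ext_ne _ _ (ne_of_evX eO xO)) ext_ne ?H1 //.
  by apply: ne_of_evX e2O _; apply: morph_evX Hs.1 xO.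
- by rewrite !ext_e.
- rewrite (ext_ne _ _ (ne_of_evX e2O xO)) ext_ne ?H2 //.
  by apply: ne_of_evX eO _; apply: morph_evX Ht.1 xO.
Qed.

Lemma maxs_iso O O' s K : iso O O' s -> K `<=` O.1 ->
  srename s (maxs O K) = maxs O' (srename s K).
Proof.
move=> Hs sK; have [t [Ht [H1 H2]]] := iso_inv Hs.
have inj u v : u \in O.1 -> v \in O.1 -> lrename s u = lrename s v -> u = v.
  by move=> uO vO e; rewrite -(iso_lK H1 uO) e (iso_lK H1 vO).
apply/fsetP => w; apply/imfsetP/idP.
- move=> [u /= um ->]; move: um; rewrite !maxsE => /andP[uK nh].
  rewrite (in_imfset _ _ uK) /=; apply/hasP => [[w' /imfsetP[v /= vK ->] /andP[ne uv]]].
  move/negP: nh; apply; apply/hasP; exists v => //; apply/andP; split.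
    by apply: contraNneq ne => ->.
  have := Ht.1.2 _ _ uv; rewrite (iso_lK H1) ?(fsubsetP sK) // (iso_lK H1) ?(fsubsetP sK) //.
- rewrite maxsE => /andP[/imfsetP[u /= uK ->] nh]; exists u => //.
  rewrite maxsE uK /=; apply/hasP => [[v vK /andP[ne uv]]].
  move/negP: nh; apply; apply/hasP; exists (lrename s v); first by apply/imfsetP; exists v.
  apply/andP; split; last exact: Hs.1.2.
  by apply: contraNneq ne => /inj ->; rewrite ?(fsubsetP sK).
Qed.

Lemma srenameU s (A B : {fset lev E Act}) : srename s (A `|` B) = srename s A `|` srename s B.
Proof. by rewrite /srename imfsetU. Qed.

Lemma srename1 s (u : lev E Act) : srename s [fset u] = [fset lrename s u].
Proof. by rewrite /srename imfset_fset1. Qed.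

Lemma step_transport (N : net Act S T) O O' s c K e a q e2 :
  iso O O' s -> wf_poset O' -> stepC N (O, c) (K, (e, a)) q -> e2 \notin evX O' ->
  stepC N (O', crename s c) (srename s K, (e2, a))
     (delta O' (srename s K) e2 a, crename (ext s e e2) q.2) /\
  iso (delta O K e a) (delta O' (srename s K) e2 a) (ext s e e2).
Proof.
move=> Hs wO' Hst e2O.
have [Hp eO sK _] := step_inv Hst.
move: Hst => [t [c0 [c' [_ [/= Hc [Hpl [/= Hl [_ [/= HK ->]]]]]]]]].
split; last exact: delta_iso Hs Hp.1 wO' eO e2O sK.
have c0O : causes c0 `<=` O.1.
  apply/fsubsetP => u /causesP[k kc uk].
  by apply: (pmark_sub (p := k) Hp) => //=; rewrite Hc in_fsetU kc.
have supp k u : k \in c -> u \in k.1 -> ext s e e2 u.1 = s u.1.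
  move=> kc uk; apply: ext_ne; apply: ne_of_evX eO _; apply: evX_in.
  exact: (pmark_sub Hp kc uk).
exists t, (crename s c0), (crename s c'); split; first exact: (pmark_transport wO' Hs Hp).
split; first by rewrite /= Hc crenameU.
split; first by rewrite places_crename.
split => //; split => //; split; first by rewrite /= causes_crename HK (maxs_iso Hs).
congr (_, _); rewrite /= crenameU mk_crename srenameU srename1 causes_crename.
rewrite (@srename_eq _ _ _ s); last first.
  move=> u /causesP[k kc uk]; apply: (supp k) => //; by rewrite Hc in_fsetU kc.
rewrite (@crename_eq _ _ _ _ s) ?/lrename /= ?ext_e //.
by move=> k u kc uk; apply: (supp k) => //; rewrite Hc in_fsetU kc orbT.
Qed.

End Transport.

Section Inv.
Variables (E Act S T : choiceType).
Implicit Types (O : poset E Act) (K : {fset lev E Act}) (c : cmark E Act S) (s t : E -> E).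
Variable (E_infinite : forall X : {fset E}, exists e : E, e \notin X).
Variable (N : net Act S T).

Lemma crename_fix O c g : is_pmark (O, c) -> (forall x, x \in evX O -> g x = x) ->
  crename g c = c.
Proof.
move=> Hp H; rewrite (@crename_eq _ _ _ _ id) ?crename_id //.
by move=> k u kc uk; rewrite H //; apply: evX_in; apply: (pmark_sub Hp kc uk).
Qed.

Lemma srename_fix O K g : K `<=` O.1 -> (forall x, x \in evX O -> g x = x) ->
  srename g K = K.
Proof.
move=> sK H; rewrite (@srename_eq _ _ _ id) ?srename_id //.
by move=> u uK; rewrite H //; apply: evX_in; apply: (fsubsetP sK).
Qed.

Lemma ext_inv O s t K e e2 a x : (forall x, x \in evX O -> t (s x) = x) ->
  (forall x, x \in evX O -> s x \in evX O -> False) \/ True ->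
  (forall x, x \in evX O -> s x != e2) -> e \notin evX O ->
  x \in evX (delta O K e a) -> ext t e2 e (ext s e e2 x) = x.
Proof.
move=> H1 _ Hne eO; rewrite evX_delta => /orP[/eqP->|xO]; first by rewrite !ext_e.
by rewrite (ext_ne _ _ (ne_of_evX eO xO)) ext_ne ?H1 ?Hne.
Qed.

Lemma cbisim_flip R : cbisim N R -> cbisim N (fun O p q => R O q p).
Proof.
move=> HR O p q /HR [Hp [Hq [e1 [e2 [F B]]]]].
refine (conj Hq (conj Hp (conj e2 (conj e1 (conj _ _))))).
- move=> lb q' /B [p' [st [e H]]]; by exists p'.
- move=> lb p' /F [q' [st [e H]]]; by exists q'.
Qed.

Lemma simC_sym O p q : simC N O p q -> simC N O q p.
Proof. by move=> [R [HR H]]; exists (fun O p q => R O q p); split => //; apply: cbisim_flip. Qed.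

Definition Riso X (p q : pmark E Act S) := exists O0 c1 c2 s, wf_poset X /\ iso O0 X s /\
  simC N O0 (O0, c1) (O0, c2) /\ p = (X, crename s c1) /\ q = (X, crename s c2).

Lemma Riso_flip X p q : Riso X p q -> Riso X q p.
Proof.
move=> [O0 [c1 [c2 [s [w [Hs [Hsim [-> ->]]]]]]]]; exists O0, c2, c1, s.
by split => //; split => //; split => //; apply: simC_sym.
Qed.

Lemma Riso_fwd X p q lb p' : Riso X p q -> stepC N p lb p' ->
  exists q', stepC N q lb q' /\ q'.1 = p'.1 /\ Riso p'.1 p' q'.
Proof.
move=> [O0 [c1 [c2 [s [wX [Hs [[R0 [HR0 H0]] [-> ->]]]]]]]] Hst.
case: lb Hst => K' [e' a] Hst.
have [Hp e'X sK' Hp'1] := step_inv Hst.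
have Hp' := step_target Hst.
have [Hc1 [Hc2 [_ [_ [F0 _]]]]] := HR0 _ _ _ H0.
have wO0 := Hc1.1.
have [t [Ht [H1 H2]]] := iso_inv Hs.
have [e2 e2O] := E_infinite (evX O0).
have [st1 iso1] := step_transport Ht wO0 Hst e2O.
rewrite crename_comp (crename_fix Hc1) in st1; last by move=> x xO; rewrite /= H1.
have [q0 [stq0 [q01 Rq0]]] := F0 _ _ st1.
have [stq iso2] := step_transport Hs wX stq0 e'X.
rewrite srename_comp (srename_fix sK') in stq iso2; last by move=> x xO; rewrite /= H2.
exists (delta X K' e' a, crename (ext s e2 e') q0.2); split => //; split; first by rewrite Hp'1.
exists (delta O0 (srename t K') e2 a), (crename (ext t e' e2) p'.2), q0.2, (ext s e2 e').
split; first exact: Hp'.1.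
split; first by rewrite Hp'1.
split.
  exists R0; split => //; move: Rq0 q01; case: (q0) => a1 b1 /= H e; rewrite e in H; exact: H.
split; last by rewrite Hp'1.
rewrite crename_comp (@crename_fix p'.1); first by case: (p').
  by case: (p') Hp'.
move=> x; rewrite Hp'1 => xd; apply: (@ext_inv X t s K' e' e2 a) => //; first by right.
move=> y yX; apply: ne_of_evX e2O _; apply: morph_evX Ht.1 yX.
Qed.

End Inv.

Section Inv2.
Variables (E Act S T : choiceType).
Variable (E_infinite : forall X : {fset E}, exists e : E, e \notin X).
Variable (N : net Act S T).

Lemma Riso_pmark X (p q : pmark E Act S) : Riso N X p q -> is_pmark p /\ is_pmark q /\ p.1 = X /\ q.1 = X.
Proof.
move=> [O0 [c1 [c2 [s [wX [Hs [[R0 [HR0 H0]] [-> ->]]]]]]]].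
have [Hc1 [Hc2 _]] := HR0 _ _ _ H0.
split; first exact: (pmark_transport wX Hs Hc1).
by split; first exact: (pmark_transport wX Hs Hc2).
Qed.

Lemma Riso_cbisim : cbisim N (@Riso E Act S T N).
Proof.
move=> X p q HR; have [Hp [Hq [e1 e2]]] := Riso_pmark HR.
do 4 (split; first done); split.
  by move=> lb p' st; apply: (Riso_fwd E_infinite HR st).
move=> lb q' st; have [p' [st' [e H]]] := Riso_fwd E_infinite (Riso_flip HR) st.
by exists p'; split; first done; split; first done; exact: Riso_flip H.
Qed.

Lemma simC_iso O O' s (c1 c2 : cmark E Act S) : wf_poset O' -> iso O O' s ->
  simC N O (O, c1) (O, c2) -> simC N O' (O', crename s c1) (O', crename s c2).
Proof.
move=> w Hs H; exists (Riso N); split; first exact: Riso_cbisim.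
by exists O, c1, c2, s.
Qed.

End Inv2.

Section Main1.
Variables (E Act S T : choiceType).
Variable (E_infinite : forall X : {fset E}, exists e : E, e \notin X).
Variable (N : net Act S T).
Variable (A : abs_setting E Act).
Variable (HA : wf_setting A).
Implicit Types (O P : poset E Act) (K : {fset lev E Act}) (s t : E -> E).

Lemma canon_wf O : wf_poset O -> wf_poset (canon A O).
Proof. by have [H _] := HA; apply: H. Qed.

Lemma alpha_iso O : wf_poset O -> iso O (canon A O) (alpha A O).
Proof. by have [_ [H _]] := HA; apply: H. Qed.

Lemma canon_idem O : wf_poset O -> canon A (canon A O) = canon A O.
Proof.
move=> w; have [_ [_ [H _]]] := HA.
have [t [Ht _]] := iso_inv (alpha_iso w).
apply: H; [exact: canon_wf | exact: w | by exists t].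
Qed.

Lemma canon_iso O O' s : wf_poset O -> wf_poset O' -> iso O O' s -> canon A O = canon A O'.
Proof. by have [_ [_ [H _]]] := HA => w w' Hs; apply: H => //; exists s. Qed.

Lemma newold_iso O K e a : wf_poset O -> canon A O = O -> K `<=` O.1 -> e \notin evX O ->
  iso (delta O K e a) (canon A (delta O K e a))
      (fun x => if x == e then newf A O K a else oldf A O K a x).
Proof. by have [_ [_ [_ H]]] := HA; apply: H. Qed.

Lemma srename_sub O O' s K : morphism O O' s -> K `<=` O.1 -> srename s K `<=` O'.1.
Proof.
move=> Hs sK; apply/fsubsetP => u /imfsetP[v /= vK ->]; apply: (morph_lev Hs).
exact: (fsubsetP sK).
Qed.

Lemma big_iso O P s K e e' a : wf_poset O -> wf_poset P -> canon A P = P ->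
  iso O P s -> e \notin evX O -> e' \notin evX P -> K `<=` O.1 ->
  iso (delta O K e a) (canon A (delta P (srename s K) e' a))
    (fun x => if x == e then newf A P (srename s K) a else oldf A P (srename s K) a (s x)).
Proof.
move=> wO wP cP Hs eO e'P sK.
have wD : wf_poset (delta O K e a) by apply: wf_delta.
have wD' : wf_poset (delta P (srename s K) e' a) by apply: wf_delta.
have := iso_comp (delta_iso a Hs wO wP eO e'P sK)
   (newold_iso a wP cP (srename_sub Hs.1 sK) e'P).
move/iso_ext; apply => //; first exact: canon_wf.
move=> x; rewrite evX_delta => /orP[/eqP->|xO] /=; first by rewrite ext_e eqxx eqxx.
rewrite (ext_ne _ _ (ne_of_evX eO xO)) (negbTE (ne_of_evX eO xO)).
by rewrite (negbTE (ne_of_evX e'P (morph_evX Hs.1 xO))).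
Qed.

Definition RA (P : poset E Act) (p q : pmark E Act S) := canon A P = P /\ simC N P p q.

Lemma RA_fwd P p q lb p' : RA P p q -> stepAC N A p lb p' ->
  exists q', stepAC N A q lb q' /\ q'.1 = p'.1 /\ RA p'.1 p' q'.
Proof.
move=> [cP Hsim] [O'' [c [K [e [a [c'' [st [ep [elb [e' [e'P ep']]]]]]]]]]].
have [R [HR H]] := Hsim.
have [Hp [Hq [p1 [q1 _]]]] := HR _ _ _ H.
have [HpO eO sK _] := step_inv st.
have wO := HpO.1.
have Hs := alpha_iso wO.
have [b [Hb [H1 H2]]] := iso_inv Hs.
have P'' : P = canon A O'' by rewrite -p1 ep.
have wP : wf_poset P by rewrite P''; apply: canon_wf.
have pE : p = (P, crename (alpha A O'') c) by rewrite ep P''.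
have qE : q = (P, q.2) by case: (q) q1 => ? ? /= ->.
have Hsim' : simC N (canon A O'') (canon A O'', crename (alpha A O'') c) (canon A O'', q.2).
  by rewrite -P'' -pE -qE.
have := simC_iso E_infinite wO Hb Hsim'.
rewrite crename_comp (crename_fix HpO); last by move=> x xO; rewrite /= H1.
move=> [R0 [HR0 H0]].
have [_ [_ [_ [_ [F0 _]]]]] := HR0 _ _ _ H0.
have [q0 [stq0 [q01 Rq0]]] := F0 _ _ st.
have HqP : is_pmark (canon A O'', q.2) by rewrite -P'' -qE.
eexists; split.
  exists O'', (crename b q.2), K, e, a, q0.2; split.
    by move: stq0 q01; case: (q0) => x y /= st' ex; rewrite ex in st'.
  split.
    rewrite qE crename_comp (crename_fix HqP) ?P'' //.
  split; first exact: elb.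
  exists e'; split; first exact: e'P.
  reflexivity.
split; first by rewrite ep'.
rewrite ep' /=; split.
  by apply: canon_idem; apply: wf_delta => //; apply: canon_wf.
apply: (simC_iso E_infinite).
- by apply: canon_wf; apply: wf_delta => //; apply: canon_wf.
- by apply: (@big_iso O'') => //; [exact: canon_wf | exact: canon_idem].
- exists R0; split => //; move: Rq0 q01; case: (q0) => x y /= H' ex; rewrite ex in H'; exact: H'.
Qed.

End Main1.

Section Main2.
Variables (E Act S T : choiceType).
Variable (E_infinite : forall X : {fset E}, exists e : E, e \notin X).
Variable (N : net Act S T).
Variable (A : abs_setting E Act).
Variable (HA : wf_setting A).
Implicit Types (O P : poset E Act) (K : {fset lev E Act}) (s t : E -> E).

Lemma RA_flip P (p q : pmark E Act S) : RA N A P p q -> RA N A P q p.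
Proof. by move=> [c H]; split => //; apply: simC_sym. Qed.

Lemma RA_abisim : abisim N A (@RA E Act S T N A).
Proof.
move=> P p q HR; have [cP [R [HRb H]]] := HR.
have [Hp [Hq [p1 [q1 _]]]] := HRb _ _ _ H.
do 5 (split; first done); split.
  by move=> lb p' st; apply: (RA_fwd E_infinite HA HR st).
move=> lb q' st; have [p' [st' [e H']]] := RA_fwd E_infinite HA (RA_flip HR) st.
by exists p'; split; first done; split; first done; exact: RA_flip H'.
Qed.

Lemma dir1 O (c1 c2 : cmark E Act S) : is_pmark (O, c1) ->
  simC N O (O, c1) (O, c2) ->
  simAC N A (canon A O) (canon A O, crename (alpha A O) c1) (canon A O, crename (alpha A O) c2).
Proof.
move=> H1 Hs; exists (@RA E Act S T N A); split; first exact: RA_abisim.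
split; first exact: canon_idem H1.1.
apply: (simC_iso E_infinite) Hs; first exact: canon_wf H1.1.
exact: alpha_iso H1.1.
Qed.

End Main2.

Section Main3.
Variables (E Act S T : choiceType).
Variable (E_infinite : forall X : {fset E}, exists e : E, e \notin X).
Variable (N : net Act S T).
Variable (A : abs_setting E Act).
Variable (HA : wf_setting A).
Implicit Types (O P : poset E Act) (K : {fset lev E Act}) (s t : E -> E).

Lemma abisim_flip R : abisim N A R -> abisim N A (fun O p q => R O q p).
Proof.
move=> HR O p q /HR [c [Hp [Hq [e1 [e2 [F B]]]]]].
refine (conj c (conj Hq (conj Hp (conj e2 (conj e1 (conj _ _)))))).
- move=> lb q' /B [p' [st [e H]]]; by exists p'.
- move=> lb p' /F [q' [st [e H]]]; by exists q'.
Qed.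

Lemma simAC_sym O (p q : pmark E Act S) : simAC N A O p q -> simAC N A O q p.
Proof. by move=> [R [HR H]]; exists (fun O p q => R O q p); split => //; apply: abisim_flip. Qed.

Definition RC O0 (p q : pmark E Act S) := p.1 = O0 /\ q.1 = O0 /\ is_pmark p /\ is_pmark q /\
  exists phi, iso O0 (canon A O0) phi /\
    simAC N A (canon A O0) (canon A O0, crename phi p.2) (canon A O0, crename phi q.2).

Lemma RC_flip O0 p q : RC O0 p q -> RC O0 q p.
Proof.
move=> [p1 [q1 [Hp [Hq [phi [Hphi H]]]]]]; do 4 (split; first done).
by exists phi; split => //; apply: simAC_sym.
Qed.

Lemma RC_fwd O0 p q lb p' : RC O0 p q -> stepC N p lb p' ->
  exists q', stepC N q lb q' /\ q'.1 = p'.1 /\ RC p'.1 p' q'.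
Proof.
move=> [p1 [q1 [Hp [Hq [phi [Hphi [RA0 [HRA H0]]]]]]]] st.
case: lb st => K [e a] st.
have [_ eO sK Hp'1] := step_inv st.
rewrite p1 in eO sK Hp'1.
have Hp' := step_target st.
have pE : p = (O0, p.2) by case: (p) p1 => ? ? /= ->.
have qE : q = (O0, q.2) by case: (q) q1 => ? ? /= ->.
set c1 := p.2 in pE H0; set c2 := q.2 in qE H0.
rewrite pE in st Hp; rewrite qE in Hq.
have wO0 := Hp.1.
set P := canon A O0 in Hphi H0 HRA *.
have wP : wf_poset P by apply: canon_wf.
have eP : canon A P = P by apply: canon_idem.
have HaP := alpha_iso HA wP; rewrite eP in HaP.
have [g [Hg [Hg1 Hg2]]] := iso_inv HaP.
have Hpsi := iso_comp Hphi Hg.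
have [e2 e2P] := E_infinite (evX P).
have [stp iso1] := step_transport Hpsi wP st e2P.
set L := srename phi K.
have phiP x : x \in evX O0 -> phi x \in evX P by move=> xO; apply: morph_evX Hphi.1 xO.
have hL : srename (alpha A P) (srename (g \o phi) K) = L.
  rewrite srename_comp; apply: srename_eq => u uK /=.
  by rewrite Hg2 // phiP // evX_in // (fsubsetP sK).
have hc1 : crename (alpha A P) (crename (g \o phi) c1) = crename phi c1.
  rewrite crename_comp; apply: crename_eq => k u kc uk /=.
  by rewrite Hg2 // phiP // evX_in // (pmark_sub Hp kc uk).
have [pA [stA pAE]] : exists pA, stepAC N A (P, crename phi c1) (L, a) pA /\
   pA = (canon A (delta P L e2 a),
         crename (fun x => if x == e2 then newf A P L a else oldf A P L a (alpha A P x))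
                 (crename (ext (g \o phi) e e2) p'.2)).
  eexists; split.
    exists P, (crename (g \o phi) c1), (srename (g \o phi) K), e2, a,
      (crename (ext (g \o phi) e e2) p'.2).
    split; first exact: stp.
    split; first by rewrite eP hc1.
    split; first by rewrite hL.
    exists e2; split; first by rewrite eP.
    reflexivity.
  by rewrite eP hL.
have [_ [_ [_ [_ [_ [FA _]]]]]] := HRA _ _ _ H0.
have [qA [stqA [qA1 RqA]]] := FA _ _ stA.
move: stqA => [O'' [cq [K'' [e'' [a'' [c'' [stq'' [eq1 [eq2 [e3 [e3P eqq]]]]]]]]]]].
case: eq1 => hP'' hc2; case: eq2 => hL'' ha; subst a''.
rewrite -hP'' -hL'' in eqq.
have [HpO'' e''O sK'' _] := step_inv stq''.
have Hp'' := step_target stq''.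
have wO'' := HpO''.1.
have Ha'' := alpha_iso HA wO''; rewrite -hP'' in Ha''.
have [phii [Hphii [Hphii1 Hphii2]]] := iso_inv Hphi.
have Hchi := iso_comp Ha'' Hphii.
have [stq iso3] := step_transport Hchi wO0 stq'' eO.
have hq : crename (phii \o alpha A O'') cq = c2.
  by rewrite -crename_comp -hc2 crename_comp (crename_fix Hq).
have hK : srename (phii \o alpha A O'') K'' = K.
  by rewrite -srename_comp -hL'' /L srename_comp (srename_fix sK).
rewrite hq hK in stq.
have Hq' := step_target stq.
exists (delta O0 K e a, crename (ext (phii \o alpha A O'') e'' e) c'').
split; first by rewrite qE.
split; first by rewrite Hp'1.
split; first by [].
split; first by rewrite Hp'1.
split; first exact: Hp'.
split; first exact: Hq'.
have wD : wf_poset (delta O0 K e a) by apply: wf_delta.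
have wD2 : wf_poset (delta P L e2 a) by apply: wf_delta.
have hcan : canon A (delta O0 K e a) = canon A (delta P L e2 a).
  exact: (canon_iso HA wD wD2 (delta_iso a Hphi wO0 wP eO e2P sK)).
exists (fun x => if x == e then newf A P L a else oldf A P L a (phi x)).
rewrite Hp'1 hcan; split; first by apply: big_iso.
exists RA0; split; first exact: HRA.
have Ep : pA = (canon A (delta P L e2 a),
    crename (fun x => if x == e then newf A P L a else oldf A P L a (phi x)) p'.2).
  rewrite pAE crename_comp; congr (_, _); apply: crename_eq => k u kc uk /=.
  have : u.1 \in evX (delta O0 K e a).
    by rewrite -Hp'1; apply: evX_in; apply: (pmark_sub (p := k) (c := p'.2)) => //; case: (p') Hp'.
  rewrite evX_delta => /orP[/eqP->|xO]; first by rewrite ext_e !eqxx.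
  have psiP : (g \o phi) u.1 \in evX P by apply: morph_evX Hpsi.1 xO.
  rewrite (ext_ne _ _ (ne_of_evX eO xO)) (negbTE (ne_of_evX e2P psiP)).
  by rewrite (negbTE (ne_of_evX eO xO)) /= Hg2 // phiP.
have Eq : qA = (canon A (delta P L e2 a),
    crename (fun x => if x == e then newf A P L a else oldf A P L a (phi x))
      (crename (ext (phii \o alpha A O'') e'' e) c'')).
  rewrite eqq; congr (_, _); first by move: qA1; rewrite eqq Ep.
  rewrite crename_comp; apply: crename_eq => k u kc uk /=.
  have : u.1 \in evX (delta O'' K'' e'' a).
    by apply: evX_in; apply: (pmark_sub (p := k) Hp'').
  rewrite evX_delta => /orP[/eqP->|xO]; first by rewrite ext_e !eqxx.
  have chiP : (phii \o alpha A O'') u.1 \in evX O0 by apply: morph_evX Hchi.1 xO.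
  rewrite (ext_ne _ _ (ne_of_evX e''O xO)) (negbTE (ne_of_evX eO chiP)).
  rewrite (negbTE (ne_of_evX e''O xO)) /= Hphii2 //.
  by apply: morph_evX Ha''.1 xO.
by move: RqA; rewrite Eq Ep.
Qed.

End Main3.

Section Main4.
Variables (E Act S T : choiceType).
Variable (E_infinite : forall X : {fset E}, exists e : E, e \notin X).
Variable (N : net Act S T).
Variable (A : abs_setting E Act).
Variable (HA : wf_setting A).

Lemma RC_cbisim : cbisim N (@RC E Act S T N A).
Proof.
move=> O0 p q HR; have [p1 [q1 [Hp [Hq _]]]] := HR.
do 4 (split; first done); split.
  by move=> lb p' st; apply: (RC_fwd E_infinite HA HR st).
move=> lb q' st; have [p' [st' [e H']]] := RC_fwd E_infinite HA (RC_flip HR) st.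
by exists p'; split; first done; split; first done; exact: RC_flip H'.
Qed.

Lemma dir2 O (c1 c2 : cmark E Act S) : is_pmark (O, c1) -> is_pmark (O, c2) ->
  simAC N A (canon A O) (canon A O, crename (alpha A O) c1) (canon A O, crename (alpha A O) c2) ->
  simC N O (O, c1) (O, c2).
Proof.
move=> H1 H2 Hs; exists (@RC E Act S T N A); split; first exact: RC_cbisim.
do 4 (split; first done); exists (alpha A O); split => //.
exact: alpha_iso H1.1.
Qed.

End Main4.

Unset Implicit Arguments.

Theorem theorem1 (E Act S T : choiceType)
  (E_infinite : forall X : {fset E}, exists e : E, e \notin X)
  (N : net Act S T) (HN : wf_net N)
  (A : abs_setting E Act) (HA : wf_setting A)
  (O : poset E Act) (c1 c2 : cmark E Act S)
  (H1 : is_pmark (O, c1)) (H2 : is_pmark (O, c2)) :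
  simC N O (O, c1) (O, c2) <->
  simAC N A (canon A O) (canon A O, crename (alpha A O) c1)
                        (canon A O, crename (alpha A O) c2).
Proof.
split; [exact: dir1 | exact: dir2].
Qed.
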